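(* There exists a QCQP in $N=2$ variables with $m=2$ constraints such that: Assumptions A and B hold; the quadratic eigenvalue multiplicity is $k=1$; $k\ge\operatorname{affdim}(\{b(\gamma):\gamma\in\mathcal F\})+1$ for every semidefinite face $\mathcal F$ of $\Gamma$; but $\mathrm{Opt}\neq\mathrm{Opt}_{\mathrm{SDP}}$ (and hence $\operatorname{conv}(\mathcal D)\neq\mathcal D_{\mathrm{SDP}}$).
   Context: A QCQP is given by integers $N\ge 1$, $m_I,m_E\ge 0$, $m:=m_I+m_E\ge 1$ and, for $i\in[0,m]$ ($[a,b]=\{a,\dots,b\}$, $[n]=[1,n]$), $q_i(x)=x^\top A_ix+2b_i^\top x+c_i$ with $A_i\in\mathbb S^N$, $b_i\in\mathbb R^N$, $c_i\in\mathbb R$. $\mathrm{Opt}:=\inf\{q_0(x): q_i(x)\le 0\ \forall i\in[m_I],\ q_i(x)=0\ \forall i\in[m_I+1,m]\}$; $\mathcal D:=\{(x,t): q_0(x)\le 2t$ and the same constraints$\}$. With $Q_i=\begin{pmatrix}c_i& b_i^\top\\ b_i& A_i\end{pmatrix}$: $\mathrm{Opt}_{\mathrm{SDP}}:=\inf\{\langle Q_0,Y\rangle: Y=\begin{pmatrix}1&x^\top\\ x& X\end{pmatrix}\succeq 0,\ X\in\mathbb S^N,\ \langle Q_i,Y\rangle\le 0\ \forall i\in[m_I],\ \langle Q_i,Y\rangle=0\ \forall i\in[m_I+1,m]\}$; $\mathcal D_{\mathrm{SDP}}:=\{(x,t):\exists X$ with $Y\succeq0$, $\langle Q_0,Y\rangle\le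 2t$ and the same constraints$\}$. $A(\gamma)=A_0+\sum\gamma_iA_i$, $b(\gamma)=b_0+\sum\gamma_ib_i$, $q(\gamma,x)=q_0(x)+\sum\gamma_iq_i(x)$; $\Gamma:=\{\gamma\in\mathbb R^m: A(\gamma)\succeq0,\ \gamma_i\ge0\ \forall i\in[m_I]\}$. Assumption A: the QCQP feasible set is nonempty and some $\gamma^*$ with $\gamma^*_i\ge0$ ($i\in[m_I]$) has $A(\gamma^* )\succ0$. Assumption B: for every $\hat x$, if $\sup_{\gamma\in\Gamma}q(\gamma,\hat x)$ is finite it is attained. A nonempty face $\mathcal F$ of $\Gamma$ is semidefinite if no $\gamma\in\mathcal F$ has $A(\gamma)\succ0$. The quadratic eigenvalue multiplicity is the largest integer $k$ (with $N=nk$) such that each $A_i=I_k\otimes\mathcal A_i$ for some $\mathcal A_i\in\mathbb S^n$. $\operatorname{affdim}$ is the dimension of the affine hull. *)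

(* Defs.v *)
From Stdlib Require Import Reals Lra Lia Arith.
Open Scope R_scope.

(* Vectors in R^n are functions nat -> R (only coordinates 0..n-1 matter;
   elements of R^n are represented by functions vanishing outside 0..n-1).
   Matrices are nat -> nat -> R. *)
Definition vec := nat -> R.
Definition mat := nat -> nat -> R.

Fixpoint rsum (n : nat) (f : nat -> R) : R :=
  match n with O => 0 | S n' => rsum n' f + f n' end.

Definition dot (n : nat) (x y : vec) : R := rsum n (fun i => x i * y i).
Definition quad (n : nat) (A : mat) (x : vec) : R :=
  rsum n (fun i => rsum n (fun j => x i * A i j * x j)).
Definition frob (n : nat) (A X : mat) : R :=
  rsum n (fun i => rsum n (fun j => A i j * X i j)).

Definition symm (n : nat) (A : mat) : Prop :=
  forall i j, (i < n)%nat -> (j < n)%nat -> A i j = A j i.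
Definition psd (n : nat) (A : mat) : Prop := forall x : vec, 0 <= quad n A x.
Definition pd (n : nat) (A : mat) : Prop :=
  forall x : vec, (exists i, (i < n)%nat /\ x i <> 0) -> 0 < quad n A x.

Definition suppv (n : nat) (x : vec) : Prop := forall i, (n <= i)%nat -> x i = 0.
Definition suppm (n : nat) (X : mat) : Prop :=
  forall i j, (n <= i)%nat \/ (n <= j)%nat -> X i j = 0.

(* QCQP data: index 0 = objective, indices 1..m = constraints,
   1..mI inequalities, mI+1..m equalities. *)
Record qcqp := Qcqp {
  qN : nat; qmI : nat; qmE : nat;
  qA : nat -> mat; qb : nat -> vec; qc : nat -> R }.

Definition qm (P : qcqp) : nat := (qmI P + qmE P)%nat.

Definition wf (P : qcqp) : Prop :=
  (1 <= qN P)%nat /\ (1 <= qm P)%nat /\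
  forall i, (i <= qm P)%nat -> symm (qN P) (qA P i).

Definition qi (P : qcqp) (i : nat) (x : vec) : R :=
  quad (qN P) (qA P i) x + 2 * dot (qN P) (qb P i) x + qc P i.

Definition feasible (P : qcqp) (x : vec) : Prop :=
  suppv (qN P) x /\
  (forall i, (1 <= i <= qmI P)%nat -> qi P i x <= 0) /\
  (forall i, (qmI P + 1 <= i <= qm P)%nat -> qi P i x = 0).

Inductive ExtR := ERfin (r : R) | ERminf | ERpinf.

Definition IsInfE (S : R -> Prop) (v : ExtR) : Prop :=
  match v with
  | ERfin r => (forall s, S s -> r <= s) /\
               (forall l, (forall s, S s -> l <= s) -> l <= r)
  | ERminf => forall M, exists s, S s /\ s < M
  | ERpinf => forall s, ~ S s
  end.

Definition opt_values (P : qcqp) (v : R) : Prop :=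
  exists x, feasible P x /\ v = qi P 0 x.

(* Q_i = [[c_i, b_i^T],[b_i, A_i]] and Y = [[1, x^T],[x, X]] as (N+1)x(N+1) *)
Definition Qmat (P : qcqp) (i : nat) : mat := fun p q =>
  match p, q with
  | O, O => qc P i
  | O, S q' => qb P i q'
  | S p', O => qb P i p'
  | S p', S q' => qA P i p' q'
  end.

Definition Ymat (x : vec) (X : mat) : mat := fun p q =>
  match p, q with
  | O, O => 1
  | O, S q' => x q'
  | S p', O => x p'
  | S p', S q' => X p' q'
  end.

Definition sdp_feasible (P : qcqp) (x : vec) (X : mat) : Prop :=
  suppv (qN P) x /\ suppm (qN P) X /\ symm (qN P) X /\
  psd (S (qN P)) (Ymat x X) /\
  (forall i, (1 <= i <= qmI P)%nat -> frob (S (qN P)) (Qmat P i) (Ymat x X) <= 0) /\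
  (forall i, (qmI P + 1 <= i <= qm P)%nat -> frob (S (qN P)) (Qmat P i) (Ymat x X) = 0).

Definition sdp_values (P : qcqp) (v : R) : Prop :=
  exists x X, sdp_feasible P x X /\ v = frob (S (qN P)) (Qmat P 0) (Ymat x X).

Definition Dset (P : qcqp) (p : vec * R) : Prop :=
  feasible P (fst p) /\ qi P 0 (fst p) <= 2 * snd p.

Definition Dsdp (P : qcqp) (p : vec * R) : Prop :=
  exists X, sdp_feasible P (fst p) X /\
    frob (S (qN P)) (Qmat P 0) (Ymat (fst p) X) <= 2 * snd p.

Definition conv (Sv : vec * R -> Prop) (p : vec * R) : Prop :=
  exists (n : nat) (l : nat -> R) (pts : nat -> vec * R),
    (forall i, (i < n)%nat -> 0 <= l i /\ Sv (pts i)) /\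
    rsum n l = 1 /\
    (forall j, fst p j = rsum n (fun i => l i * fst (pts i) j)) /\
    snd p = rsum n (fun i => l i * snd (pts i)).

(* multipliers gamma in R^m: functions supported on indices 1..m *)
Definition suppg (m : nat) (g : vec) : Prop :=
  forall i, (i = 0%nat \/ (m < i)%nat) -> g i = 0.

Definition Agam (P : qcqp) (g : vec) : mat := fun i j =>
  qA P 0 i j + rsum (qm P) (fun k => g (S k) * qA P (S k) i j).
Definition bgam (P : qcqp) (g : vec) : vec := fun i =>
  qb P 0 i + rsum (qm P) (fun k => g (S k) * qb P (S k) i).
Definition qgam (P : qcqp) (g : vec) (x : vec) : R :=
  qi P 0 x + rsum (qm P) (fun k => g (S k) * qi P (S k) x).

Definition Gamma (P : qcqp) (g : vec) : Prop :=
  suppg (qm P) g /\ psd (qN P) (Agam P g) /\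
  (forall i, (1 <= i <= qmI P)%nat -> 0 <= g i).

Definition AssumptionA (P : qcqp) : Prop :=
  (exists x, feasible P x) /\
  (exists g, suppg (qm P) g /\ (forall i, (1 <= i <= qmI P)%nat -> 0 <= g i) /\
             pd (qN P) (Agam P g)).

Definition AssumptionB (P : qcqp) : Prop :=
  forall xh : vec, suppv (qN P) xh ->
    (exists g, Gamma P g) ->
    (exists M, forall g, Gamma P g -> qgam P g xh <= M) ->
    exists g0, Gamma P g0 /\ forall g, Gamma P g -> qgam P g xh <= qgam P g0 xh.

(* I_k (x) B for B an n x n matrix: block diagonal with k copies of B *)
Definition kron_id (n : nat) (B : mat) : mat := fun p q =>
  if Nat.eqb (p / n) (q / n) then B (p mod n) (q mod n) else 0.

Definition has_mult (P : qcqp) (k : nat) : Prop :=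
  exists n, qN P = (n * k)%nat /\
    forall i, (i <= qm P)%nat ->
      exists B, symm n B /\
        forall p q, (p < qN P)%nat -> (q < qN P)%nat -> qA P i p q = kron_id n B p q.

Definition quad_eig_mult (P : qcqp) (k : nat) : Prop :=
  has_mult P k /\ forall k', has_mult P k' -> (k' <= k)%nat.

Definition comb (t : R) (x y : vec) : vec := fun i => t * x i + (1 - t) * y i.

Definition is_face (P : qcqp) (F : vec -> Prop) : Prop :=
  (forall g, F g -> Gamma P g) /\
  (forall x y t, F x -> F y -> 0 <= t <= 1 -> F (comb t x y)) /\
  (forall x y t, Gamma P x -> Gamma P y -> 0 < t < 1 -> F (comb t x y) ->
     F x /\ F y).

Definition semidef_face (P : qcqp) (F : vec -> Prop) : Prop :=
  is_face P F /\ (exists g, F g) /\ (forall g, F g -> ~ pd (qN P) (Agam P g)).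

(* affine dimension of S ⊆ R^n: dimension of the affine hull, i.e.
   d such that S contains d+1 but not d+2 affinely independent points *)
Definition aff_indep (n d : nat) (p : nat -> vec) : Prop :=
  forall a : nat -> R,
    (forall j, (j < n)%nat -> rsum d (fun i => a i * (p (S i) j - p 0%nat j)) = 0) ->
    forall i, (i < d)%nat -> a i = 0.

Definition has_aff_indep (n d : nat) (Sv : vec -> Prop) : Prop :=
  exists p : nat -> vec, (forall i, (i <= d)%nat -> Sv (p i)) /\ aff_indep n d p.

Definition affdim (n : nat) (Sv : vec -> Prop) (d : nat) : Prop :=
  has_aff_indep n d Sv /\ ~ has_aff_indep n (S d) Sv.

Definition bset (P : qcqp) (F : vec -> Prop) (v : vec) : Prop :=
  exists g, F g /\ v = bgam P g.

(* Main.v *)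
Require Import Defs.
From Stdlib Require Import Reals.
From Stdlib Require Import Lra Lia Psatz.
Open Scope R_scope.

Definition Aex (i : nat) : mat :=
  match i with
  | O => fun p q => match p, q with O, O => 1 | S O, S O => 1 | _, _ => 0 end
  | S O => fun p q => match p, q with O, O => 1 | S O, S O => -1 | _, _ => 0 end
  | S (S O) => fun p q => match p, q with O, S O => 1 | S O, O => 1 | _, _ => 0 end
  | _ => fun _ _ => 0
  end.
Definition bex (i : nat) : vec :=
  match i with O => fun j => match j with S O => 1 | _ => 0 end | _ => fun _ => 0 end.
Definition cex (i : nat) : R := match i with S O => -1 | _ => 0 end.
Definition Pex : qcqp := Qcqp 2 0 2 Aex bex cex.

Lemma feas_lb x : feasible Pex x -> 1 <= qi Pex 0 x.
Proof.
  intros [_ [_ H]].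
  pose proof (H 1%nat ltac:(cbn; lia)) as H1.
  pose proof (H 2%nat ltac:(cbn; lia)) as H2.
  unfold qi, quad, dot in *; cbn in *.
  assert (x 1%nat = 0).
  { destruct (Req_dec (x 0%nat) 0) as [E|E].
    - rewrite E in H1. nra.
    - apply (Rmult_eq_reg_l (x 0%nat)); [|exact E]. nra. }
  rewrite H0 in *. nra.
Qed.

Lemma rsum_lb n l t c : (forall i, (i < n)%nat -> 0 <= l i /\ c <= t i) ->
  c * rsum n l <= rsum n (fun i => l i * t i).
Proof.
  induction n; intros H; cbn.
  - lra.
  - destruct (H n ltac:(lia)).
    assert (c * rsum n l <= rsum n (fun i => l i * t i)) by (apply IHn; intros; apply H; lia).
    nra.
Qed.

Lemma disk g : psd 2 (Agam Pex g) -> g 1%nat * g 1%nat + g 2%nat * g 2%nat <= 1.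
Proof.
  intros H.
  pose proof (H (fun i => match i with O => g 2%nat | S O => -(1 + g 1%nat) | _ => 0 end)) as Ha.
  pose proof (H (fun i => match i with O => 1 - g 1%nat | S O => - g 2%nat | _ => 0 end)) as Hb.
  unfold quad, Agam in *; cbn in *. nra.
Qed.

Lemma cs2 a b u v : (a*u+b*v)*(a*u+b*v) <= (a*a+b*b)*(u*u+v*v).
Proof.
  assert (0 <= (a*v-b*u)*(a*v-b*u)) by apply Rle_0_sqr.
  replace ((a*a+b*b)*(u*u+v*v)) with ((a*u+b*v)*(a*u+b*v) + (a*v-b*u)*(a*v-b*u)) by ring.
  lra.
Qed.

Lemma key g1 g2 y0 y1 : g1*g1 + g2*g2 <= 1 ->
  0 <= (y0*y0 + y1*y1) + (g1 * (y0*y0 - y1*y1) + g2 * (2*y0*y1)).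
Proof.
  intros H.
  pose proof (cs2 g1 g2 (y0*y0 - y1*y1) (2*y0*y1)) as C.
  set (w := g1 * (y0*y0 - y1*y1) + g2 * (2*y0*y1)) in *.
  assert (E : (y0*y0 - y1*y1)*(y0*y0 - y1*y1) + (2*y0*y1)*(2*y0*y1) = (y0*y0+y1*y1)*(y0*y0+y1*y1)) by ring.
  rewrite E in C. clearbody w.
  set (s := y0*y0+y1*y1) in *.
  assert (Hs : 0 <= s) by (unfold s; nra). clearbody s.
  assert (0 <= s*s) by nra.
  assert (w*w <= s*s) by nra.
  nra.
Qed.

Lemma disk_psd g : g 1%nat * g 1%nat + g 2%nat * g 2%nat <= 1 -> psd 2 (Agam Pex g).
Proof.
  intros H y. unfold quad, Agam; cbn.
  pose proof (key (g 1%nat) (g 2%nat) (y 0%nat) (y 1%nat) H). nra.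
Qed.

Lemma qgam_eq g x : qgam Pex g x = qi Pex 0 x + g 1%nat * qi Pex 1 x + g 2%nat * qi Pex 2 x.
Proof. unfold qgam; cbn [qm Pex qmI qmE Nat.add rsum]. ring. Qed.

Definition xs : vec := fun i => match i with S O => -1/2 | _ => 0 end.
Definition Xs : mat := fun i j => match i, j with O, O => 5/4 | S O, S O => 1/4 | _, _ => 0 end.

Lemma xs_feas : sdp_feasible Pex xs Xs.
Proof.
  split; [|split; [|split; [|split; [|split]]]].
  - intros i Hi; cbn in Hi. destruct i as [|[|i]]; try lia; reflexivity.
  - intros i j Hij; cbn in Hij. destruct i as [|[|i]]; destruct j as [|[|j]]; try lia; reflexivity.
  - intros i j Hi Hj; cbn in *. destruct i as [|[|i]]; destruct j as [|[|j]]; try lia; reflexivity.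
  - intros v. unfold quad; cbn.
    assert (0 <= (v 0%nat - v 2%nat / 2)^2) by apply pow2_ge_0.
    assert (0 <= (v 1%nat)^2) by apply pow2_ge_0. lra.
  - intros i Hi; cbn in Hi; lia.
  - intros i Hi; cbn in Hi. unfold frob.
    destruct i as [|[|[|i]]]; try lia; cbn; lra.
Qed.

Lemma xs_val : frob (S (qN Pex)) (Qmat Pex 0) (Ymat xs Xs) = 1/2.
Proof. unfold frob; cbn; lra. Qed.

Lemma sdp_lb x X : sdp_feasible Pex x X -> 1/2 <= frob (S (qN Pex)) (Qmat Pex 0) (Ymat x X).
Proof.
  intros [_ [_ [_ [Hp [_ He]]]]].
  pose proof (He 1%nat ltac:(cbn; lia)) as H1.
  pose proof (Hp (fun i => match i with O => 1/2 | S (S O) => 1 | _ => 0 end)) as Hq.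
  unfold frob, quad in *; cbn in *. lra.
Qed.

Definition x1 : vec := fun i => match i with O => 1 | _ => 0 end.
Lemma x1_feas : feasible Pex x1.
Proof.
  split; [|split].
  - intros i Hi; cbn in Hi. destruct i as [|[|i]]; try lia; reflexivity.
  - intros i Hi; cbn in Hi; lia.
  - intros i Hi; cbn in Hi. unfold qi, quad, dot.
    destruct i as [|[|[|i]]]; try lia; cbn; lra.
Qed.

Ltac symm_tac :=
  let i := fresh in let j := fresh in let h1 := fresh in let h2 := fresh in
  intros i j h1 h2; destruct i as [|[|i]]; destruct j as [|[|j]]; try lia; reflexivity.

Theorem mainTheorem16 :
  exists P : qcqp,
    qN P = 2%nat /\ qm P = 2%nat /\ wf P /\
    AssumptionA P /\ AssumptionB P /\
    quad_eig_mult P 1%nat /\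
    (forall F, semidef_face P F ->
       exists d, affdim (qN P) (bset P F) d /\ (d + 1 <= 1)%nat) /\
    (exists v1 v2, IsInfE (opt_values P) v1 /\ IsInfE (sdp_values P) v2 /\ v1 <> v2) /\
    (exists p, ~ (conv (Dset P) p <-> Dsdp P p)).
Proof.
  exists Pex.
  split; [reflexivity|]. split; [reflexivity|].
  split; [|split; [|split; [|split; [|split; [|split]]]]].
  -
    split; [cbn; lia|]. split; [cbn; lia|].
    intros i Hi; cbn in Hi. destruct i as [|[|[|i]]]; try lia; cbn; symm_tac.
  -
    split; [exists x1; apply x1_feas|].
    exists (fun _ => 0). split; [intros i _; reflexivity|]. split; [intros i Hi; cbn in Hi; lia|].
    intros y [i [Hi Hy]]. unfold quad, Agam; cbn in *.
    destruct i as [|[|i]]; try lia.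
    + assert (0 < y 0%nat * y 0%nat) by (apply Rsqr_pos_lt; exact Hy). nra.
    + assert (0 < y 1%nat * y 1%nat) by (apply Rsqr_pos_lt; exact Hy). nra.
  -
    intros xh _ _ _.
    set (a := qi Pex 1 xh). set (b := qi Pex 2 xh).
    set (r := sqrt (a*a + b*b)).
    assert (Hr0 : 0 <= r) by apply sqrt_pos.
    assert (Hrr : r * r = a*a + b*b) by (apply sqrt_sqrt; nra).
    set (g0 := fun i => match i with S O => a / r | S (S O) => b / r | _ => 0 end).
    assert (Hbound : forall g, Gamma Pex g -> g 1%nat * a + g 2%nat * b <= r).
    { intros g [_ [Hp _]]. apply disk in Hp.
      pose proof (cs2 (g 1%nat) (g 2%nat) a b) as C.
      clearbody a b r g0.
      set (w := g 1%nat * a + g 2%nat * b) in *. clearbody w.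
      set (u := g 1%nat * g 1%nat + g 2%nat * g 2%nat) in *. clearbody u.
      rewrite <- Hrr in C.
      assert (w*w <= r*r) by nra.
      nra. }
    destruct (Req_dec r 0) as [Hr|Hr].
    + assert (a = 0) by nra. assert (b = 0) by nra.
      exists (fun _ => 0). split.
      * split; [intros i _; reflexivity|]. split; [|intros i Hi; cbn in Hi; lia].
        apply disk_psd. lra.
      * intros g _. rewrite !qgam_eq. fold a b. rewrite H, H0. lra.
    + assert (Hrp : 0 < r) by lra.
      exists g0. split.
      * split; [intros i Hi; destruct Hi as [Hi|Hi]; [subst; reflexivity|];
                 cbn in Hi; destruct i as [|[|[|i]]]; try lia; reflexivity|].
        split; [|intros i Hi; cbn in Hi; lia].
        apply disk_psd. cbn.
        assert (a/r*(a/r) + b/r*(b/r) = (a*a+b*b)/(r*r)) by (field; lra).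
        rewrite H, <- Hrr. unfold Rdiv. rewrite Rinv_r; [lra|nra].
      * intros g Hg. rewrite !qgam_eq. fold a b.
        assert (a/r*a + b/r*b = r).
        { assert (a/r*a + b/r*b = (a*a+b*b)/r) by (field; lra).
          rewrite H, <- Hrr. field; lra. }
        cbn [g0]. specialize (Hbound g Hg). lra.
  -
    split.
    + exists 2%nat. split; [reflexivity|].
      intros i Hi. exists (Aex i). split.
      * cbn in Hi. destruct i as [|[|[|i]]]; try lia; cbn; symm_tac.
      * intros p q Hp Hq; cbn in Hp, Hq.
        destruct p as [|[|p]]; destruct q as [|[|q]]; try lia; reflexivity.
    + intros k' [n [Hn Hk]]. cbn in Hn.
      destruct k' as [|[|k'']]; [lia|lia|].
      destruct n as [|[|n]]; [lia| |lia].
      destruct k'' as [|k'']; [|lia].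
      destruct (Hk 1%nat ltac:(cbn; lia)) as [B [_ HB]].
      pose proof (HB 0%nat 0%nat ltac:(cbn; lia) ltac:(cbn; lia)) as E0.
      pose proof (HB 1%nat 1%nat ltac:(cbn; lia) ltac:(cbn; lia)) as E1.
      cbn in E0, E1. lra.
  -
    intros F [_ [[g Fg] _]]. exists 0%nat. split; [|lia].
    split.
    + exists (fun _ => bgam Pex g). split.
      * intros i _. exists g. split; [exact Fg|reflexivity].
      * intros a _ i Hi. lia.
    + intros [p [Hp Hind]].
      destruct (Hp 0%nat ltac:(lia)) as [g0 [_ E0]].
      destruct (Hp 1%nat ltac:(lia)) as [g1 [_ E1]].
      assert (1 = 0).
      { refine (Hind (fun _ => 1) _ 0%nat _); [|lia].
        intros j _. cbn. rewrite E0, E1. unfold bgam. cbn. ring. }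
      lra.
  -
    exists (ERfin 1), (ERfin (1/2)). split; [|split].
    + split.
      * intros s [x [Hx ->]]. apply feas_lb; exact Hx.
      * intros l Hl. apply Hl. exists x1. split; [apply x1_feas|].
        unfold qi, quad, dot; cbn; lra.
    + split.
      * intros s [x [X [Hx ->]]]. apply sdp_lb; exact Hx.
      * intros l Hl. rewrite <- xs_val. apply Hl. exists xs, Xs. split; [apply xs_feas|reflexivity].
    + intros H. injection H. lra.
  - exists (xs, 1/4). intros [_ H2].
    assert (Hd : Dsdp Pex (xs, 1/4)).
    { exists Xs. split; [apply xs_feas|]. cbn [fst snd]. rewrite xs_val. lra. }
    destruct (H2 Hd) as [n [l [pts [Hpts [Hl [_ Ht]]]]]].
    cbn [snd] in Ht.
    assert (1/2 * rsum n l <= rsum n (fun i => l i * snd (pts i))).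
    { apply rsum_lb. intros i Hi. destruct (Hpts i Hi) as [H0 [Hf Hq]].
      split; [exact H0|]. apply feas_lb in Hf. lra. }
    rewrite Hl in H. lra.
Qed.
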